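(* There exists an absolute constant $\xi>0$ such that for every $\rho<\xi$: if $T$ is an $\alpha$-approximate integral solution of the MMDA instance $G^{(\rho)}_{n,\ell}$, then $\alpha\ge n^{\Omega(1/\ell)}$.
   Context: MMDA: an $\alpha$-approximate integral solution of a layered instance with source $s$, sinks $L_\ell$ and required out-degrees $k_u$ is $T\subseteq E$ with $|\delta_T^+(s)|\ge k_s/\alpha$, every vertex of in-degree at most $1$ in $T$, and $|\delta^+_T(v)|\ge k_v/\alpha$ for every non-sink $v\ne s$ of in-degree $1$ in $T$. The instance $G^{(\rho)}_{n,\ell}$: integers $m$ and $1/\epsilon$ with $\epsilon\rho m\in\mathbb N$, $\ell=3/\epsilon$, $\epsilon m=\omega(\log m)$ (when $\ell=3$, $\epsilon=1$); ground set $[m]$. Each vertex $v$ has a label $S_v\subseteq[m]$: $L_0=\{s\}$ with $S_s=\emptyset$; for $1\le i<2/\epsilon$, $L_i$ has one vertex per subset of size $i\epsilon\rho m$; for $2/\epsilon\le i\le3/\epsilon$, one vertex per subset of size $(4-i\epsilon)\rho m$. For $u\in L_{i-1},v\in L_i$, edge $(u,v)$ iff $S_u\subseteq S_v$ ($i\le 2/\epsilon$) or $S_v\subseteq S_u$ ($i>2/\epsilon$). Sinks: $L_{3/\epsilon}$. With $\delta_i^+$ the out-degree of vertices in $L_i$, $k_v=\gamma_i\delta^+_i$ for $v\in L_i$, $i<\ell$, where $\gamma_i=\gamma'_1$ ($0\le i<1/\epsilon$), $\gamma'_2$ ($1/\epsilon\le i<2/\epsilon$), $\gamma'_3$ ($2/\epsilon\le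 i<3/\epsilon$), $\gamma'_1=\frac{(\epsilon\rho m)!}{((\rho m)!\binom{(1-\rho)m}{\rho m})^{\epsilon}}$, $\gamma'_2=\frac{(\epsilon\rho m)!}{((\rho m)!\binom{2\rho m}{\rho m})^{\epsilon}}$, $\gamma'_3=\frac{(\epsilon\rho m)!}{((\rho m)!)^{\epsilon}}$. $n$ is the number of vertices, $n=2^{\Theta(m)}$. *)

(* Defs.v *)
From Stdlib Require Import Reals.
From mathcomp Require Import all_boot.
Set Implicit Arguments. Unset Strict Implicit. Unset Printing Implicit Defensive.

(* Parameters of G^(rho)_{n,l}: t = 1/eps (so l = 3t), m = size of ground set,
   q = eps*rho*m (a natural number), hence rho*m = t*q.                      *)

Definition lsize (t q i : nat) : nat :=
  if (i < 2 * t)%N then (i * q)%N else ((4 * t - i) * q)%N.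

Definition V (t m : nat) := ('I_(3 * t).+1 * {set 'I_m})%type.

Definition is_vertex (t m q : nat) (v : V t m) : bool :=
  #|v.2| == lsize t q v.1.

Definition is_edge (t m q : nat) (u v : V t m) : bool :=
  [&& is_vertex q u, is_vertex q v, (nat_of_ord v.1 == (nat_of_ord u.1).+1)
   & (if (nat_of_ord v.1 <= 2 * t)%N then u.2 \subset v.2 else v.2 \subset u.2)].

Definition nverts (t m q : nat) : nat := #|[pred v : V t m | is_vertex q v]|.

Definition src (t m : nat) : V t m := (ord0, set0).

Definition is_sink (t m : nat) (v : V t m) : bool := nat_of_ord v.1 == (3 * t)%N.

Definition Goutdeg (t m q : nat) (u : V t m) : nat :=
  #|[pred w : V t m | is_edge q u w]|.

Definition outdegT (t m : nat) (T : {set V t m * V t m}) (v : V t m) : nat :=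
  #|[set e in T | e.1 == v]|.
Definition indegT (t m : nat) (T : {set V t m * V t m}) (v : V t m) : nat :=
  #|[set e in T | e.2 == v]|.

Open Scope R_scope.

(* gamma'_1, gamma'_2, gamma'_3 ; x^eps = x^(1/t) *)
Definition gam1 (t m q : nat) : R :=
  INR (q`!) / Rpower (INR ((t * q)`! * 'C(m - t * q, t * q))) (/ INR t).
Definition gam2 (t q : nat) : R :=
  INR (q`!) / Rpower (INR ((t * q)`! * 'C(2 * (t * q), t * q))) (/ INR t).
Definition gam3 (t q : nat) : R :=
  INR (q`!) / Rpower (INR ((t * q)`!)) (/ INR t).

Definition gamma (t m q i : nat) : R :=
  if (i < t)%N then gam1 t m q else if (i < 2 * t)%N then gam2 t q else gam3 t q.

Definition kreq (t m q : nat) (v : V t m) : R :=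
  gamma t m q v.1 * INR (Goutdeg q v).

Definition approx_sol (t m q : nat) (alpha : R) (T : {set V t m * V t m}) : Prop :=
  (forall e, e \in T -> is_edge q e.1 e.2) /\
  kreq q (src t m) / alpha <= INR (outdegT T (src t m)) /\
  (forall v : V t m, (indegT T v <= 1)%N) /\
  (forall v : V t m, is_vertex q v -> ~~ is_sink v -> v <> src t m ->
     indegT T v = 1%N -> kreq q v / alpha <= INR (outdegT T v)).

(* Main.v *)
Require Import Defs.
From Stdlib Require Import Reals Lra Lia.
From mathcomp Require Import all_boot zify.
Set Implicit Arguments. Unset Strict Implicit. Unset Printing Implicit Defensive.
Open Scope R_scope.

Section Part1.

Lemma disj_of (U : finType) (A B : {set U}) :
  (forall x, x \in A -> x \in B -> False) -> [disjoint A & B].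
Proof.
move=> H; rewrite disjoints_subset; apply/subsetP => x xA; rewrite inE.
by apply/negP => xB; exact: H x xA xB.
Qed.

Section Tree.
Local Open Scope nat_scope.
Variables (t m q : nat) (T : {set V t m * V t m}).
Hypothesis Tedge : forall e, e \in T -> is_edge q e.1 e.2.
Hypothesis Tin : forall v : V t m, indegT T v <= 1.

Fixpoint Sk (n : nat) (v : V t m) : {set V t m} :=
  match n with
  | 0 => [set v]
  | n'.+1 => \bigcup_c (if (v, c) \in T then Sk n' c else set0)
  end.

Lemma par_uniq w1 w2 c : (w1, c) \in T -> (w2, c) \in T -> w1 = w2.
Proof.
move=> h1 h2; have := Tin c; rewrite /indegT => /card_le1_eqP H.
have := H (w1, c) (w2, c); rewrite !inE h1 h2 /= eqxx => /(_ isT isT).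
by case.
Qed.

Lemma Sk_disj n : forall c1 c2 x, x \in Sk n c1 -> x \in Sk n c2 -> c1 = c2.
Proof.
elim: n => [|n IH] c1 c2 x /=.
  by rewrite !inE => /eqP -> /eqP.
move=> /bigcupP [d1 _]; case: ifP => h1; last by rewrite inE.
move=> x1 /bigcupP [d2 _]; case: ifP => h2; last by rewrite inE.
move=> x2; have e := IH _ _ _ x1 x2; subst d2.
exact: par_uniq h1 h2.
Qed.

Lemma Sk_sum a b v (E : V t m -> nat) :
  \sum_(x in Sk (a + b) v) E x = \sum_(w in Sk a v) \sum_(x in Sk b w) E x.
Proof.
elim: a v => [|a IH] v.
  by rewrite add0n /= big_set1.
rewrite addSn /=.
rewrite (@partition_disjoint_bigcup _ _ _ _ addn (fun c => if (v, c) \in T then Sk (a + b) c else set0)).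
  rewrite (@partition_disjoint_bigcup _ _ _ _ addn (fun c => if (v, c) \in T then Sk a c else set0)).
    apply: eq_bigr => c _; case: ifP => _; last by rewrite !big_set0.
    exact: IH.
  move=> i j ij; case: ifP => _; last by apply: disj_of => x; rewrite inE.
  case: ifP => _; last by apply: disj_of => x _; rewrite inE.
  apply: disj_of => x xi xj; move/negP: ij; apply; apply/eqP; exact: Sk_disj xi xj.
move=> i j ij; case: ifP => _; last by apply: disj_of => x; rewrite inE.
case: ifP => _; last by apply: disj_of => x _; rewrite inE.
apply: disj_of => x xi xj; move/negP: ij; apply; apply/eqP; exact: Sk_disj xi xj.
Qed.


Lemma edgeP e : e \in T -> [/\ is_vertex q e.1, is_vertex q e.2,
   nat_of_ord e.2.1 = (nat_of_ord e.1.1).+1 &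
   (if (nat_of_ord e.2.1 <= 2 * t) then e.1.2 \subset e.2.2 else e.2.2 \subset e.1.2)].
Proof. by move/Tedge; case/and4P => a b /eqP c d. Qed.

Lemma SkS n (v x : V t m) : x \in Sk n.+1 v -> exists c, (v, c) \in T /\ x \in Sk n c.
Proof.
move=> /bigcupP [c _]; case: ifP => h; last by rewrite inE.
by move=> xc; exists c.
Qed.

Lemma Sk_layer n (v x : V t m) : x \in Sk n v -> nat_of_ord x.1 = v.1 + n.
Proof.
elim: n v => [|n IH] v; first by rewrite inE => /eqP ->; rewrite addn0.
case/SkS => c [vc xc]; rewrite (IH _ xc); case: (edgeP vc) => _ _ /= -> _.
by rewrite addSnnS.
Qed.

Lemma Sk_vertex n (v x : V t m) : is_vertex q v -> x \in Sk n v -> is_vertex q x.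
Proof.
elim: n v => [|n IH] v; first by rewrite inE => ? /eqP ->.
move=> _ /SkS [c [vc xc]]; apply: (IH c) => //; by case: (edgeP vc).
Qed.

Lemma Sk_down n (v x : V t m) : 2 * t <= v.1 -> x \in Sk n v -> x.2 \subset v.2.
Proof.
elim: n v => [|n IH] v; first by rewrite inE => ? /eqP ->.
move=> hv /SkS [c [vc xc]]; case: (edgeP vc) => _ _ /= e1 e2.
have hc : 2 * t <= c.1 by rewrite e1; apply: leqW.
apply: subset_trans (IH c hc xc) _.
by move: e2; rewrite e1 leqNgt ltnS hv /=.
Qed.

Lemma Sk_up n (v x : V t m) : v.1 + n <= 2 * t -> x \in Sk n v -> v.2 \subset x.2.
Proof.
elim: n v => [|n IH] v; first by rewrite inE => ? /eqP ->.
move=> hv /SkS [c [vc xc]]; case: (edgeP vc) => _ _ /= e1 e2.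
have hc : c.1 + n <= 2 * t by rewrite e1 addSnnS.
apply: subset_trans _ (IH c hc xc).
by move: e2; rewrite e1 ifT //; apply: leq_trans hv; rewrite -addn1 leq_add2l.
Qed.

Definition good (v : V t m) := is_vertex q v /\ (v = src t m \/ indegT T v = 1).

Lemma Sk_good n (v x : V t m) : good v -> x \in Sk n v -> good x.
Proof.
elim: n v => [|n IH] v; first by rewrite inE => ? /eqP ->.
move=> [vv _] /SkS [c [vc xc]]; apply: (IH c) => //.
case: (edgeP vc) => _ /= cv _ _; split => //; right.
apply/eqP; rewrite eqn_leq Tin /= card_gt0; apply/set0Pn; exists (v, c).
by rewrite inE vc /=.
Qed.

Lemma Sk1_card v : #|Sk 1 v| = outdegT T v.
Proof.
have -> : Sk 1 v = snd @: [set e in T | e.1 == v].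
  apply/setP => x; apply/idP/idP.
    case/SkS => c [vc]; rewrite inE => /eqP ->.
    by apply/imsetP; exists (v, c) => //; rewrite inE vc /=.
  case/imsetP => [[a b]]; rewrite inE /= => /andP [ab /eqP av] ->; subst a.
  by apply/bigcupP; exists b => //; rewrite ab inE.
rewrite card_in_imset //.
move=> [a b] [c d]; rewrite !inE /= => /andP [_ /eqP ->] /andP [_ /eqP ->] /= -> //.
Qed.

End Tree.

End Part1.

Section Part2.
Local Open Scope nat_scope.

Lemma card_sup (m : nat) (X : {set 'I_m}) k :
  #|[set S : {set 'I_m} | (X \subset S) && (#|S| == #|X| + k)]| = 'C(m - #|X|, k).
Proof.
have <- : #|~: X| = m - #|X| by have := cardsC X; rewrite card_ord; move: #|X| #|~: X| => a b <-; rewrite addKn.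
rewrite -cards_draws.
rewrite -(@card_in_imset _ _ (fun S => S :\: X)).
  apply: eq_card => D. apply/idP/idP.
    case/imsetP => S; rewrite inE => /andP [XS /eqP cS] ->.
    rewrite inE; apply/andP; split.
      by apply/subsetP => x; rewrite !inE => /andP [].
    by rewrite cardsD (setIidPr XS) cS addKn.
  rewrite inE => /andP [DX /eqP cD]; apply/imsetP; exists (D :|: X).
    rewrite inE subsetUr /= cardsU.
    have -> : D :&: X = set0.
      apply/setP => x; rewrite !inE; apply/negP => /andP [xD xX].
      by move/subsetP: DX => /(_ x xD); rewrite inE xX.
    by rewrite cards0 subn0 cD addnC.
  apply/setP => x; rewrite !inE; case xX: (x \in X); rewrite /= ?orbF ?andbT //.
  by apply/negP => xD; move/subsetP: DX => /(_ x xD); rewrite inE xX.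
move=> S1 S2; rewrite !inE => /andP [h1 _] /andP [h2 _] e.
apply/setP => x; case xX: (x \in X); first by rewrite (subsetP h1 _ xX) (subsetP h2 _ xX).
by move/setP: e => /(_ x); rewrite !inE xX.
Qed.

Section Deg.
Variables (t m q : nat).

Definition degF (j : nat) : nat :=
  if j.+1 <= 2 * t then 'C(m - lsize t q j, lsize t q j.+1 - lsize t q j)
  else 'C(lsize t q j, lsize t q j.+1).

Lemma Goutdeg_eq (v : V t m) : is_vertex q v -> v.1 < 3 * t -> Goutdeg q v = degF v.1.
Proof.
move=> vv lt3.
have lt' : (nat_of_ord v.1).+1 < (3 * t).+1 by [].
pose j1 : 'I_(3 * t).+1 := Ordinal lt'.
pose cond (S : {set 'I_m}) := (#|S| == lsize t q (v.1.+1)) &&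
   (if v.1.+1 <= 2 * t then v.2 \subset S else S \subset v.2).
have -> : Goutdeg q v = #|[set S | cond S]|.
  rewrite /Goutdeg -(@card_imset _ _ (fun S => (j1, S))); last by move=> a b [].
  apply: eq_card => w; rewrite inE /is_edge vv /=.
  apply/idP/idP.
    case/and3P => wv /eqP e1 e2; apply/imsetP; exists w.2.
      by rewrite inE /cond -e1 e2 andbT; move: wv; rewrite /is_vertex.
    by case: w wv e1 e2 => [a b] /= _ e1 _; congr pair; apply: val_inj.
  case/imsetP => S; rewrite inE /cond => /andP [cS cI] -> /=.
  by rewrite /is_vertex /= cS eqxx cI.
rewrite /degF /cond; case: ifP => h.
  have hl : lsize t q v.1 <= lsize t q v.1.+1.
    rewrite /lsize ifT; last by apply: leq_trans h; rewrite ltnS.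
    case: ifP => h2; first by rewrite leq_mul2r leqW ?orbT.
    have -> : 4 * t - v.1.+1 = v.1.+1 by move: h h2; move: (nat_of_ord v.1) => a; lia.
    by rewrite leq_mul2r leqnSn orbT.
  move: (vv); rewrite /is_vertex => /eqP e.
  rewrite -e -card_sup; apply: eq_card => S; rewrite !inE andbC.
  by rewrite subnKC // e.
move: vv; rewrite /is_vertex => /eqP <-.
rewrite -cards_draws; apply: eq_card => S; rewrite !inE andbC.
done.
Qed.

End Deg.

End Part2.

Section Part3.

Fixpoint prodR (i n : nat) (f : nat -> R) : R :=
  match n with 0 => 1 | S n' => (f i * prodR (S i) n' f) end.

Lemma sum_lb_seq (U : eqType) (s : seq U) (g : U -> nat) (P : R) :
  (forall w, w \in s -> (P <= INR (g w))) ->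
  (INR (size s) * P <= INR (\sum_(w <- s) g w)).
Proof.
elim: s => [|a s IH] H; first by rewrite big_nil /=; lra.
rewrite big_cons [size _]/= S_INR plus_INR.
have h1 := H a (mem_head a s).
have h2 : (INR (size s) * P <= INR (\sum_(w <- s) g w)).
  by apply: IH => w ws; apply: H; rewrite in_cons ws orbT.
lra.
Qed.

Lemma sum_lb (U : finType) (S : {set U}) (g : U -> nat) (P : R) :
  (forall w, w \in S -> (P <= INR (g w))) ->
  (INR #|S| * P <= INR (\sum_(w in S) g w)).
Proof.
move=> H; rewrite -big_enum cardE; apply: sum_lb_seq => w; rewrite mem_enum; exact: H.
Qed.

Lemma Rpower_pos x y : (0 < Rpower x y).
Proof. rewrite /Rpower; exact: exp_pos. Qed.

Lemma gamma_ge0 t m q j : (0 <= gamma t m q j).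
Proof.
rewrite /gamma /gam1 /gam2 /gam3.
case: ifP => _; [|case: ifP => _];
  (apply: Rmult_le_pos; [exact: pos_INR | left; apply: Rinv_0_lt_compat; exact: Rpower_pos]).
Qed.

Section LB.
Variables (t m q : nat) (T : {set V t m * V t m}) (alpha : R).
Hypothesis Tedge : forall e, e \in T -> is_edge q e.1 e.2.
Hypothesis Tin : forall v : V t m, (indegT T v <= 1)%N.
Hypothesis apos : (0 < alpha).
Hypothesis hsrc : (kreq q (src t m) / alpha <= INR (outdegT T (src t m))).
Hypothesis hoth : forall v : V t m, is_vertex q v -> ~~ is_sink v -> v <> src t m ->
     indegT T v = 1%N -> (kreq q v / alpha <= INR (outdegT T v)).

Definition fdeg (j : nat) : R := (gamma t m q j * INR (degF t m q j) / alpha).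

Lemma fdeg_ge0 j : (0 <= fdeg j).
Proof.
rewrite /fdeg /Rdiv; apply: Rmult_le_pos; last by left; apply: Rinv_0_lt_compat.
apply: Rmult_le_pos; [exact: gamma_ge0 | exact: pos_INR].
Qed.

Lemma prodR_ge0 i n : (0 <= prodR i n fdeg).
Proof.
elim: n i => [|n IH] i /=; first lra.
apply: Rmult_le_pos; [exact: fdeg_ge0 | exact: IH].
Qed.

Lemma LB n : forall v : V t m, good q T v -> (v.1 + n <= 3 * t)%N ->
  (prodR v.1 n fdeg <= INR #|Sk T n v|).
Proof.
elim: n => [|n IH] v gv hn /=.
  by rewrite cards1 /=; lra.
have lt3 : (v.1 < 3 * t)%N by apply: leq_trans hn; rewrite -addn1 leq_add2l.
have -> : #|Sk T n.+1 v| = \sum_(w in Sk T 1 v) #|Sk T n w|.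
  rewrite -sum1_card -(add1n n) (Sk_sum Tin).
  by apply: eq_bigr => w _; rewrite sum1_card.
have Hw : forall w, w \in Sk T 1 v -> (prodR (v.1).+1 n fdeg <= INR #|Sk T n w|).
  move=> w wS; have := Sk_layer Tedge wS; rewrite addn1 => <-.
  apply: IH. exact: (@Sk_good t m q T Tedge Tin 1 v w gv wS).
  by rewrite (Sk_layer Tedge wS) addn1 addSnnS.
apply: Rle_trans (sum_lb Hw).
apply: Rmult_le_compat_r; first exact: prodR_ge0.
rewrite Sk1_card.
have -> : fdeg v.1 = (kreq q v / alpha).
  by rewrite /fdeg /kreq (Goutdeg_eq gv.1 lt3).
case: gv => vv [->|hi]; first exact: hsrc.
case: (eqVneq v (src t m)) => [->|ne]; first exact: hsrc.
apply: hoth => //; last by apply/eqP.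
by rewrite /is_sink neq_ltn lt3.
Qed.
End LB.

End Part3.

Section Part4.

Lemma prodR_ext i n f g : (forall j, (i <= j < i + n)%N -> f j = g j) ->
  prodR i n f = prodR i n g.
Proof.
elim: n i => [|n IH] i H //=.
rewrite H; last by rewrite leqnn /= addnS ltnS leq_addr.
congr (_ * _); apply: IH => j /andP [h1 h2]; apply: H.
by rewrite (ltnW h1) /= addnS -addSn.
Qed.

Lemma prodR_split i a b f : prodR i (a + b) f = prodR i a f * prodR (i + a) b f.
Proof.
elim: a i => [|a IH] i; first by rewrite add0n addn0 /=; lra.
by rewrite addSn /= IH -addSnnS; lra.
Qed.

Lemma prodR_scale i n c (g : nat -> R) al : al <> 0 ->
  prodR i n (fun j => c * g j / al) = c ^ n * prodR i n g / al ^ n.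
Proof.
move=> ha; elim: n i => [|n IH] i /=; first by field.
rewrite IH; field; split => //; exact: pow_nonzero.
Qed.

Lemma Rpower_inv_pow x t : 0 < x -> (0 < t)%N -> Rpower x (/ INR t) ^ t = x.
Proof.
move=> hx ht; rewrite -Rpower_pow; last exact: Rpower_pos.
rewrite Rpower_mult Rinv_l ?Rpower_1 //.
apply: not_0_INR; lia.
Qed.

Lemma bin_factR n k : (k <= n)%N ->
  INR 'C(n, k) * INR (k`!) * INR ((n - k)`!) = INR (n`!).
Proof. by move=> h; rewrite -(bin_fact h) !mult_INR; lra. Qed.

Lemma fact_posR n : 0 < INR (n`!).
Proof. apply: lt_0_INR; apply/ltP; exact: fact_gt0. Qed.

Section Prods.
Variables (t m q : nat).
Hypothesis ht : (0 < t)%N.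
Hypothesis hm : (2 * (t * q) <= m)%N.

Lemma up_id n : (n <= t)%N ->
  prodR (2 * t - n) n (fun j => INR 'C(m - j * q, q)) * INR (q`!) ^ n * INR ((m - 2 * (t * q))`!)
  = INR ((m - (2 * t - n) * q)`!).
Proof.
elim: n => [|n IH] hn /=.
  by rewrite subn0 mulnA; lra.
have -> : (2 * t - n.+1).+1 = (2 * t - n)%N by lia.
rewrite -(bin_factR (n := m - (2 * t - n.+1) * q) (k := q)); last first.
  have : ((2 * t - n.+1).+1 * q <= m)%N.
    apply: leq_trans hm; rewrite mulnA leq_mul2r; apply/orP; right; lia.
  rewrite mulSn; lia.
have -> : (m - (2 * t - n.+1) * q - q = m - (2 * t - n) * q)%N.
  have e : (2 * t - n = (2 * t - n.+1).+1)%N by lia.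
  rewrite e [((_).+1 * q)%N]mulSn; move: ((2 * t - n.+1) * q)%N => y; lia.
rewrite -IH; last lia.
lra.
Qed.

Lemma down_id n : (n <= t)%N ->
  prodR (3 * t - n) n (fun j => INR 'C((4 * t - j) * q, (4 * t - j).-1 * q)) *
    INR (q`!) ^ n * INR ((t * q)`!)
  = INR (((t + n) * q)`!).
Proof.
elim: n => [|n IH] hn /=.
  by rewrite addn0; lra.
have -> : (3 * t - n.+1).+1 = (3 * t - n)%N by lia.
have -> : (4 * t - (3 * t - n.+1) = (t + n).+1)%N by lia.
rewrite addnS -(bin_factR (n := (t + n).+1 * q) (k := (t + n).+1.-1 * q)); last first.
  by rewrite leq_mul2r leqnSn orbT.
have -> : ((t + n).+1 * q - (t + n).+1.-1 * q = q)%N.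
  by rewrite [((t + n).+1 * q)%N]mulSn /=; move: ((t + n) * q)%N => y; lia.
rewrite -IH; last lia.
rewrite /=; lra.
Qed.

End Prods.

End Part4.

Section Part5.

Section Phases.
Variables (t m q : nat) (alpha : R).
Hypothesis ht : (0 < t)%N.
Hypothesis hm : (2 * (t * q) <= m)%N.
Hypothesis apos : 0 < alpha.

Let fd := fdeg t m q alpha.

Lemma fdeg_up j : (t <= j < 2 * t)%N ->
  fd j = gam2 t q * INR 'C(m - j * q, q) / alpha.
Proof.
case/andP => h1 h2; rewrite /fd /fdeg /gamma ltnNge h1 /= h2 /degF h2.
have -> : lsize t q j = (j * q)%N by rewrite /lsize h2.
have -> : lsize t q j.+1 = (j.+1 * q)%N.
  rewrite /lsize; case: ifP => // h3.
  have -> : (4 * t - j.+1 = j.+1)%N by lia.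
  done.
by rewrite mulSn addnK.
Qed.

Lemma fdeg_down j : (2 * t <= j < 3 * t)%N ->
  fd j = gam3 t q * INR 'C((4 * t - j) * q, (4 * t - j).-1 * q) / alpha.
Proof.
case/andP => h1 h2.
have n1 : ~~ (j < t)%N by rewrite -leqNgt; lia.
have n2 : ~~ (j < 2 * t)%N by rewrite -leqNgt.
have n3 : ~~ (j.+1 <= 2 * t)%N by rewrite -ltnNge ltnS.
rewrite /fd /fdeg /gamma (negbTE n1) (negbTE n2) /degF (negbTE n3) /lsize (negbTE n2).
have n4 : ~~ (j.+1 < 2 * t)%N by rewrite -leqNgt; lia.
rewrite (negbTE n4).
by have -> : (4 * t - j.+1 = (4 * t - j).-1)%N by lia.
Qed.

Lemma prod_down : prodR (2 * t) t fd = INR 'C(2 * (t * q), t * q) / alpha ^ t.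
Proof.
rewrite (prodR_ext (g := fun j => gam3 t q *
   INR 'C((4 * t - j) * q, (4 * t - j).-1 * q) / alpha)); last first.
  move=> j hj; apply: fdeg_down; lia.
rewrite prodR_scale; last lra.
have hd := down_id ht hm (leqnn t).
move: hd; have -> : (3 * t - t = 2 * t)%N by lia.
have -> : ((t + t) * q = 2 * (t * q))%N by lia.
move=> hd.
have hb := bin_factR (n := (2 * (t * q))%N) (k := (t * q)%N) ltac:(lia).
have e2 : (2 * (t * q) - t * q = t * q)%N by lia.
rewrite e2 in hb.
have g3 : gam3 t q ^ t = INR (q`!) ^ t / INR ((t * q)`!).
  rewrite /gam3 /Rdiv Rpow_mult_distr pow_inv Rpower_inv_pow //; exact: fact_posR.
rewrite g3.
have f1 := fact_posR (t * q). have f2 := fact_posR q.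
have f3 : 0 < INR (q`!) ^ t by apply: pow_lt.
have f4 : 0 < alpha ^ t by apply: pow_lt.
set P := prodR (2 * t) t _ in hd *.
have eP : P = INR (2 * (t * q))`! / (INR q`! ^ t * INR (t * q)`!).
  rewrite -hd; field; lra.
have eC : INR 'C(2 * (t * q), t * q) = INR (2 * (t * q))`! / (INR (t * q)`! * INR (t * q)`!).
  rewrite -hb; field; lra.
rewrite eP eC; field; lra.
Qed.

Lemma prod_up : prodR t t fd =
  INR 'C(m - t * q, t * q) / INR 'C(2 * (t * q), t * q) / alpha ^ t.
Proof.
rewrite (prodR_ext (g := fun j => gam2 t q * INR 'C(m - j * q, q) / alpha)); last first.
  move=> j hj; apply: fdeg_up; lia.
rewrite prodR_scale; last lra.
have hd := up_id ht hm (leqnn t).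
move: hd; have -> : (2 * t - t = t)%N by lia.
move=> hd.
have hb := bin_factR (n := (m - t * q)%N) (k := (t * q)%N) ltac:(lia).
have e2 : (m - t * q - t * q = m - 2 * (t * q))%N by lia.
rewrite e2 in hb.
have cpos : 0 < INR 'C(2 * (t * q), t * q).
  apply: lt_0_INR; apply/ltP; rewrite bin_gt0; lia.
have g2 : gam2 t q ^ t = INR (q`!) ^ t / (INR ((t * q)`!) * INR 'C(2 * (t * q), t * q)).
  rewrite /gam2 /Rdiv Rpow_mult_distr pow_inv Rpower_inv_pow // ?mult_INR //.
  rewrite -mult_INR; apply: lt_0_INR; apply/ltP; rewrite muln_gt0 fact_gt0 bin_gt0; lia.
rewrite g2.
have f1 := fact_posR (t * q). have f2 := fact_posR q.
have f5 := fact_posR (m - 2 * (t * q)).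
have f3 : 0 < INR (q`!) ^ t by apply: pow_lt.
have f4 : 0 < alpha ^ t by apply: pow_lt.
set P := prodR t t _ in hd *.
have eP : P = INR (m - t * q)`! / (INR q`! ^ t * INR (m - 2 * (t * q))`!).
  rewrite -hd; field; lra.
have eC : INR 'C(m - t * q, t * q) = INR (m - t * q)`! / (INR (t * q)`! * INR (m - 2 * (t * q))`!).
  rewrite -hb; field; lra.
rewrite eP eC; field; lra.
Qed.

Lemma prod_A : prodR t (2 * t) fd = INR 'C(m - t * q, t * q) / alpha ^ (2 * t).
Proof.
have -> : (2 * t = t + t)%N by lia.
rewrite prodR_split prod_up.
have -> : (t + t = 2 * t)%N by lia.
rewrite prod_down.
have cpos : 0 < INR 'C(2 * (t * q), t * q).
  apply: lt_0_INR; apply/ltP; rewrite bin_gt0; lia.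
have f4 : 0 < alpha ^ t by apply: pow_lt.
have -> : (2 * t = t + t)%N by lia.
rewrite pow_add; field; lra.
Qed.

Lemma prod_src_pos : 0 < prodR 0 t fd.
Proof.
have : forall i, (i <= t)%N -> 0 < prodR (t - i) i fd.
  elim => [|i IH] hi /=; first lra.
  apply: Rmult_lt_0_compat; last first.
    have -> : (t - i.+1).+1 = (t - i)%N by lia.
    apply: IH; lia.
  have hj : (t - i.+1 < t)%N by lia.
  rewrite /fd /fdeg /gamma hj /gam1 /degF.
  have h2 : ((t - i.+1).+1 <= 2 * t)%N by lia.
  rewrite h2 /lsize ifT; last lia.
  have h3 : ((t - i.+1).+1 < 2 * t)%N = true by apply/idP; lia.
  rewrite h3 -mulnBl.
  have -> : ((t - i.+1).+1 - (t - i.+1) = 1)%N by lia.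
  rewrite mul1n.
  apply: Rmult_lt_0_compat; last by apply: Rinv_0_lt_compat.
  apply: Rmult_lt_0_compat.
    apply: Rmult_lt_0_compat; [exact: fact_posR| apply: Rinv_0_lt_compat; exact: Rpower_pos].
  apply: lt_0_INR; apply/ltP; rewrite bin_gt0.
  have : ((t - i.+1).+1 * q <= m)%N by apply: leq_trans hm; rewrite mulnA leq_mul2r; apply/orP; right; lia.
  rewrite mulSn; move: ((t - i.+1) * q)%N => y; lia.
move=> /(_ t (leqnn t)); by rewrite subnn.
Qed.
End Phases.

End Part5.

Section Part6.
Local Open Scope nat_scope.

Lemma sum_sub_size (m : nat) (X : {set 'I_m}) (w : nat -> nat) :
  \sum_(J : {set 'I_m} | J \subset X) w #|J| = \sum_(j < #|X|.+1) 'C(#|X|, j) * w j.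
Proof.
rewrite (partition_big (fun J : {set 'I_m} => (inord #|J| : 'I_(#|X|.+1))) xpredT) //=.
apply: eq_bigr => j _.
have E : forall J : {set 'I_m}, (J \subset X) && (inord #|J| == j) = (J \in [set A : {set 'I_m} | A \subset X & #|A| == j]).
  move=> J; rewrite inE; case JX: (J \subset X) => //=.
  have hJ : #|J| < #|X|.+1 by rewrite ltnS subset_leq_card.
  apply/eqP/eqP => e; first by rewrite -e inordK.
  by apply: val_inj; rewrite /= inordK.
rewrite (eq_bigl _ _ E) /=.
rewrite (eq_bigr (fun _ => w j)); last by move=> J; rewrite inE => /andP [_ /eqP ->].
by rewrite sum_nat_const cards_draws mulnC.
Qed.

Lemma low_count (m : nat) (X : {set 'I_m}) th :
  #|[set J : {set 'I_m} | (J \subset X) && (#|J| <= th)]| * 8 ^ (#|X| - th) <= 9 ^ #|X|.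
Proof.
rewrite -sum_nat_const.
apply: (@leq_trans (\sum_(J : {set 'I_m} | J \subset X) 8 ^ (#|X| - #|J|))).
  rewrite big_mkcond [X in _ <= X]big_mkcond /=; apply: leq_sum => J _.
  rewrite inE; case: (J \subset X) => //=; case: ifP => // h.
  by apply: leq_pexp2l => //; lia.
rewrite (sum_sub_size X (fun k => 8 ^ (#|X| - k))) (expnDn 8 1) leq_eqVlt; apply/orP; left; apply/eqP.
by apply: eq_bigr => j _; rewrite exp1n muln1.
Qed.

Lemma small_count (m : nat) (a b : {set 'I_m}) K th :
  a \subset b -> #|a| = K -> #|b| = 2 * K ->
  #|[set S : {set 'I_m} | [&& S \subset b, #|S| == K & #|S :&: a| <= th]]| <=
  #|[set J : {set 'I_m} | (J \subset a) && (#|J| <= th)]| *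
  #|[set J : {set 'I_m} | (J \subset b :\: a) && (#|J| <= th)]|.
Proof.
move=> ab ca cb; rewrite -cardsX.
set Sm := [set S : {set 'I_m} | _].
have inj : {in Sm &, injective (fun S => (S :&: a, (b :\: a) :\: S))}.
  move=> S1 S2; rewrite !inE => /and3P [s1 _ _] /and3P [s2 _ _] [e1 e2].
  apply/setP => x; case xa: (x \in a).
    by move/setP: e1 => /(_ x); rewrite !inE xa !andbT.
  case xb: (x \in b); last first.
    apply/idP/idP => h; [by move/subsetP: s1 => /(_ x h); rewrite xb
                        |by move/subsetP: s2 => /(_ x h); rewrite xb].
  move/setP: e2 => /(_ x); rewrite !inE xa xb /= ?andbT => h; apply: negb_inj.
  exact: h.
rewrite -(card_in_imset inj); apply: subset_leq_card; apply/subsetP => p.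
case/imsetP => S; rewrite inE => /and3P [Sb /eqP cS hS] ->.
rewrite !inE subsetIr hS /=.
apply/andP; split; first by apply/subsetP => x; rewrite !inE => /andP [].
have e1 : (b :\: a) :&: S = S :\: a.
  apply/setP => x; rewrite !inE; case xS: (x \in S); rewrite ?andbF ?andbT //.
  by rewrite (subsetP Sb x xS) andbT.
have e2 : #|b :\: a| = K by rewrite cardsD (setIidPr ab) cb ca; lia.
have e3 : #|S :\: a| = K - #|S :&: a| by rewrite cardsD cS.
have e4 : #|S :&: a| <= K by rewrite -cS subset_leq_card // subsetIl.
rewrite cardsD e1 e2 e3; lia.
Qed.

Lemma bin_ratio N K j : j <= K -> K <= N ->
  'C(N, K - j) * (N - K + 1) ^ j <= 'C(N, K) * K ^ j.
Proof.
move=> + hKN; elim: j => [|j IH] hj; first by rewrite !subn0 !expn0.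
have IH' := IH (ltnW hj).
have h1 : 'C(N, K - j.+1) * (N - K + 1) <= K * 'C(N, K - j).
  have e := mul_bin_left N (K - j.+1).
  have E : (K - j.+1).+1 = K - j by lia.
  rewrite E in e.
  apply: (@leq_trans ((K - j) * 'C(N, K - j))); last by rewrite leq_mul2r leq_subr orbT.
  rewrite e mulnC leq_mul2r; apply/orP; right; lia.
rewrite !expnS.
apply: (@leq_trans (K * 'C(N, K - j) * (N - K + 1) ^ j)).
  by rewrite mulnA leq_mul2r h1 orbT.
by rewrite -mulnA [X in _ <= X]mulnCA leq_mul2l IH' orbT.
Qed.

Lemma fiber_count (m : nat) (a J : {set 'I_m}) K :
  #|a| = K ->
  #|[set S : {set 'I_m} | #|S| == K & S :&: a == J]| <= 'C(m - K, K - #|J|).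
Proof.
move=> ca.
have cC : #|~: a| = m - K by have := cardsC a; rewrite card_ord ca; lia.
rewrite -cC -cards_draws.
set F := [set S : {set 'I_m} | _].
have inj : {in F &, injective (fun S => S :\: a)}.
  move=> S1 S2; rewrite !inE => /andP [_ /eqP e1] /andP [_ /eqP e2] e.
  apply/setP => x; case xa: (x \in a).
    have h1 : (x \in S1 :&: a) = (x \in S2 :&: a) by rewrite e1 e2.
    by move: h1; rewrite !inE xa !andbT.
  by move/setP: e => /(_ x); rewrite !inE xa.
rewrite -(card_in_imset inj); apply: subset_leq_card; apply/subsetP => R.
case/imsetP => S; rewrite /F inE => /andP [/eqP cS /eqP eJ] ->.
rewrite inE; apply/andP; split.
  by apply/subsetP => x; rewrite !inE => /andP [].
by rewrite cardsD cS eJ.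
Qed.

Lemma leq_expr a b e : a <= b -> a ^ e <= b ^ e.
Proof. move=> h; elim: e => [|e IH] //; rewrite !expnS; exact: leq_mul. Qed.

Lemma large_count (m : nat) (a : {set 'I_m}) K th :
  #|a| = K -> 3 * K <= m ->
  #|[set S : {set 'I_m} | (#|S| == K) && (th < #|S :&: a|)]| * (m - 2 * K + 1) ^ th.+1
  <= 2 ^ K * 'C(m - K, K) * K ^ th.+1.
Proof.
move=> ca hm.
set r := m - 2 * K + 1.
set G := [set S : {set 'I_m} | _].
rewrite -sum_nat_const.
rewrite (partition_big (fun S : {set 'I_m} => S :&: a) (fun J => J \subset a)); last first.
  by move=> S _; rewrite subsetIr.
apply: (@leq_trans (\sum_(J : {set 'I_m} | J \subset a) 'C(m - K, K) * K ^ th.+1)).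
  apply: leq_sum => J Ja.
  rewrite sum_nat_const.
  pose F := [pred S : {set 'I_m} | (S \in G) && (S :&: a == J)].
  have -> : #|(fun i : {set 'I_m} => (i \in G) && (i :&: a == J))| = #|F| by apply: eq_card.
  case: (posnP #|F|) => [->|hF]; first by rewrite mul0n.
  case/card_gt0P: hF => S0; rewrite /F inE /= inE => /andP [/andP [/eqP cS0 hth] /eqP eJ].
  have hJK : #|J| <= K by rewrite -ca subset_leq_card.
  have hthJ : th < #|J| by rewrite -eJ.
  apply: (@leq_trans ('C(m - K, K - #|J|) * r ^ th.+1)).
    rewrite leq_mul2r; apply/orP; right.
    apply: leq_trans (fiber_count J ca); apply: subset_leq_card; apply/subsetP => S.
    by rewrite /F !inE => /andP [/andP [-> _] ->].
  have hb := bin_ratio (N := m - K) (K := K) (j := #|J|) hJK ltac:(lia).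
  have er : m - K - K + 1 = r by rewrite /r; lia.
  rewrite er in hb.
  have rp : 0 < r by rewrite /r; lia.
  have Kr : K <= r by rewrite /r; lia.
  have ej : #|J| = th.+1 + (#|J| - th.+1) by lia.
  rewrite ej !expnD in hb.
  rewrite -(@leq_pmul2r (r ^ (#|J| - th.+1))); last by rewrite expn_gt0 rp.
  apply: (@leq_trans ('C(m - K, K) * (K ^ th.+1 * K ^ (#|J| - th.+1)))).
    by rewrite -mulnA; move: hb; rewrite -ej.
  rewrite -mulnA leq_mul2l; apply/orP; right; rewrite leq_mul2l; apply/orP; right.
  exact: leq_expr.
rewrite sum_nat_const.
have -> : #|[pred J : {set 'I_m} | J \subset a]| = 2 ^ K.
  rewrite -ca -card_powerset; apply: eq_card => J; by rewrite powersetE.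
by rewrite mulnA.
Qed.

End Part6.

Section Part7.

Lemma INR_expn a n : INR (a ^ n) = INR a ^ n.
Proof. elim: n => [|n IH] //; by rewrite expnS mult_INR IH. Qed.

Lemma bin_mid_ge (K : nat) : (2 ^ K <= 'C(2 * K, K))%N.
Proof.
elim: K => [|K IH] //.
rewrite -(@leq_pmul2l K.+1) //.
have e := mul_bin_diag (2 * K.+1) K.
rewrite -e.
have -> : ((2 * K.+1).-1 = (2 * K).+1)%N by lia.
rewrite expnS.
apply: (@leq_trans ((2 * K.+1) * 'C(2 * K, K))).
  have -> : (2 * K.+1 = K.+1 * 2)%N by lia.
  by rewrite mulnA leq_mul2l IH orbT.
by rewrite leq_mul2l leq_bin2l ?orbT.
Qed.

Lemma sum_bool_card (U : finType) (S : {set U}) (P : pred U) :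
  (\sum_(x in S) (P x : nat) = #|[set x in S | P x]|)%N.
Proof.
rewrite -sum1_card big_mkcond [RHS]big_mkcond; apply: eq_bigr => x _.
by rewrite inE; case: (x \in S); case: (P x).
Qed.

Lemma ln_le x y : 0 < x -> x <= y -> ln x <= ln y.
Proof. move=> hx [h|->]; [left; exact: ln_increasing | lra]. Qed.

Lemma ln_div x y : 0 < x -> 0 < y -> ln (x / y) = ln x - ln y.
Proof.
move=> hx hy; rewrite /Rdiv ln_mult ?ln_Rinv //; try lra.
exact: Rinv_0_lt_compat.
Qed.

Lemma ln3_bound : 8 * ln 3 <= 13 * ln 2.
Proof.
have h : 3 ^ 8 <= 2 ^ 13 by simpl; lra.
have := ln_le (pow_lt 3 8 ltac:(lra)) h.
rewrite !ln_pow; try lra.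
by rewrite !INR_IZR_INZ /=; lra.
Qed.

Lemma ln2_pos : 0 < ln 2.
Proof. have := ln_lt_2; lra. Qed.

Lemma case1 (K th t : nat) (al : R) : 0 < al -> (16 * th <= K)%N ->
  INR (2 ^ K) < 2 * (9 ^ K / 8 ^ (K - th)) ^ 2 * al ^ t ->
  (INR K / 16 - 1) * ln 2 <= INR t * ln al.
Proof.
move=> hal hth h.
have p9 : 0 < 9 ^ K by apply: pow_lt; lra.
have p8 : 0 < 8 ^ (K - th) by apply: pow_lt; lra.
have pW : 0 < 9 ^ K / 8 ^ (K - th) by apply: Rdiv_lt_0_compat.
have pa : 0 < al ^ t by apply: pow_lt.
have p2 : 0 < INR (2 ^ K) by rewrite INR_expn; apply: pow_lt; simpl; lra.
have := ln_increasing _ _ p2 h.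
rewrite INR_expn !ln_mult; try (repeat apply: Rmult_lt_0_compat); try lra; try (apply: pow_lt; lra).
rewrite !ln_pow; try lra.
rewrite !ln_Rinv ?ln_1; try (apply: pow_lt; lra).
rewrite !ln_pow; try lra.
have e9 : ln 9 = 2 * ln 3.
  replace 9 with (3 ^ 2) by (simpl; lra); rewrite ln_pow; [simpl; lra | lra].
have e8 : ln 8 = 3 * ln 2.
  replace 8 with (2 ^ 3) by (simpl; lra); rewrite ln_pow; [simpl; lra | lra].
have eth : INR (K - th) = INR K - INR th by rewrite minus_INR //; apply/leP; lia.
have hth' : 16 * INR th <= INR K.
  have : (INR (16 * th) <= INR K) by apply: le_INR; apply/leP.
  by rewrite mult_INR /=; lra.
rewrite e9 e8 eth.
have e2 : INR 2 = 2 by simpl; lra.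
rewrite e2.
have l3 := ln3_bound. have l2 := ln2_pos.
have hK : 0 <= INR K by apply: pos_INR.
have a1 : INR K * (8 * ln 3) <= INR K * (13 * ln 2) by apply: Rmult_le_compat_l.
have a2 : 16 * INR th * ln 2 <= INR K * ln 2 by apply: Rmult_le_compat_r; lra.
move=> H; nra.
all: try (simpl; lra).
all: by apply: Rinv_0_lt_compat.
Qed.

Lemma case2 (K th t r : nat) (al : R) : 0 < al -> (0 < K)%N -> (K < 16 * th.+1)%N ->
  (2 ^ 18 * K <= r)%N ->
  INR r ^ th.+1 <= INR (2 ^ K.+1) * al ^ (2 * t) * INR K ^ th.+1 ->
  (INR K / 16 - 1) * ln 2 <= INR t * ln al.
Proof.
move=> hal hK hth hr h.
have pK : 0 < INR K by apply: lt_0_INR; apply/ltP.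
have pr0 : INR (2 ^ 18 * K) <= INR r by apply: le_INR; apply/leP.
have p18 : (0 < 2 ^ 18 * K)%N by rewrite muln_gt0 expn_gt0 hK.
have p18R : 0 < INR (2 ^ 18 * K) by apply: lt_0_INR; apply/ltP.
have pr : 0 < INR r by apply: Rlt_le_trans pr0.
have lr := ln_le p18R pr0.
rewrite mult_INR INR_expn ln_mult ?ln_pow in lr; try lra; try (apply: pow_lt; simpl; lra).
have := ln_le (pow_lt _ th.+1 pr) h.
rewrite !ln_mult ?ln_pow ?INR_expn ?ln_pow; try lra; try (apply: pow_lt; simpl; lra);
  try (repeat apply: Rmult_lt_0_compat); try (apply: pow_lt; simpl; lra); try lra.
have hth' : INR K.+1 <= 16 * INR th.+1.
  have : (INR K.+1 <= INR (16 * th.+1)) by apply: le_INR; apply/leP.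
  by rewrite mult_INR /=; lra.
have e2 : INR 2 = 2 by simpl; lra.
rewrite e2 in lr *.
have l2 := ln2_pos.
have hthp : 0 <= INR th.+1 by apply: pos_INR.
have a1 : INR th.+1 * (INR 18 * ln 2 + ln (INR K)) <= INR th.+1 * ln (INR r).
  by apply: Rmult_le_compat_l.
have e18 : INR 18 = 18 by simpl; lra.
rewrite e18 in a1.
have a2 : INR K.+1 * ln 2 <= 16 * INR th.+1 * ln 2 by apply: Rmult_le_compat_r; lra.
rewrite !S_INR in a1 a2 hth' *.
rewrite mult_INR.
have e2' : INR 2 = 2 by simpl; lra.
rewrite e2'.
move=> H; lra.
all: simpl; lra.
Qed.

End Part7.

Section Part8.

Lemma card_snd_le (t m : nat) (X : {set V t m}) (Y : {set {set 'I_m}}) :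
  {in X &, forall x y, x.1 = y.1} -> {in X, forall x, x.2 \in Y} -> (#|X| <= #|Y|)%N.
Proof.
move=> h1 h2.
have inj : {in X &, injective (fun x : V t m => x.2)}.
  move=> [x1 x2] [y1 y2] hx hy /= e; have := h1 _ _ hx hy; rewrite /= e => ->; done.
rewrite -(card_in_imset inj); apply: subset_leq_card; apply/subsetP => S.
by case/imsetP => x hx ->; apply: h2.
Qed.

Lemma W_bound (U K th : nat) : (U * 8 ^ (K - th) <= 9 ^ K)%N ->
  INR U <= 9 ^ K / 8 ^ (K - th).
Proof.
move=> h; have := le_INR _ _ (elimT leP h); rewrite mult_INR !INR_expn => h'.
have p8 : 0 < INR 8 ^ (K - th) by apply: pow_lt; simpl; lra.
have e8 : INR 8 = 8 by simpl; lra.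
have e9 : INR 9 = 9 by simpl; lra.
rewrite e8 e9 in h' p8.
apply: (Rmult_le_reg_r (8 ^ (K - th))) => //.
rewrite /Rdiv Rmult_assoc Rinv_l; lra.
Qed.

Lemma core (t m q : nat) (T : {set V t m * V t m}) (alpha : R) :
  (0 < t)%N -> (0 < t * q)%N -> (3 * (t * q) <= m)%N ->
  (2 ^ 18 * (t * q) <= m - 2 * (t * q) + 1)%N ->
  0 < alpha -> approx_sol q alpha T ->
  (INR (t * q) / 16 - 1) * ln 2 <= INR t * ln alpha.
Proof.
move=> ht hK hm3 hr apos [Tedge [hsrc [Tin hoth]]].
have hm : (2 * (t * q) <= m)%N by move: hm3; move: (t * q)%N => K; lia.
have srcv : is_vertex q (src t m).
  have h2 : (0 < 2 * t)%N by lia.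
  by rewrite /is_vertex /lsize /= h2 cards0 mul0n.
have gsrc : good q T (src t m) by split => //; left.
have h0 : ((src t m).1 + t <= 3 * t)%N by rewrite /= add0n; lia.
have LB0 := LB Tedge Tin apos hsrc hoth gsrc h0.
change (nat_of_ord (src t m).1) with 0%N in LB0.
have pos := prod_src_pos ht hm apos.
have : (0 < #|Sk T t (src t m)|)%N.
  apply/ltP; apply: INR_lt; change (INR 0) with 0; lra.
case/card_gt0P => A AS.
have gA := Sk_good Tedge Tin gsrc AS.
have A1 : nat_of_ord A.1 = t by rewrite (Sk_layer Tedge AS).
have hA : (A.1 + 2 * t <= 3 * t)%N by rewrite A1; lia.
have LBA := LB Tedge Tin apos hsrc hoth gA hA.
rewrite A1 (prod_A ht hm apos) in LBA.
set a := A.2.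
have ca : #|a| = (t * q)%N.
  case: gA => /eqP -> _; rewrite A1 /lsize.
  have -> : (t < 2 * t)%N by lia.
  by rewrite mulnC.
pose th := ((t * q) %/ 16)%N.
have th16 : (16 * th <= t * q)%N by rewrite /th; move: (t * q)%N => K; lia.
have th16' : (t * q < 16 * th.+1)%N by rewrite /th; move: (t * q)%N => K; lia.
pose W := 9 ^ (t * q) / 8 ^ (t * q - th).
case: (Rle_or_lt (2 * W ^ 2 * alpha ^ t) (INR 'C(2 * (t * q), t * q))) => [c2|c1]; last first.
  apply: (case1 (th := th)) => //.
  apply: Rle_lt_trans c1; apply: le_INR; apply/leP; exact: bin_mid_ge.
have apt : 0 < alpha ^ t by apply: pow_lt.
have W0 : 0 <= W by rewrite /W; apply: Rlt_le; apply: Rdiv_lt_0_compat; apply: pow_lt; lra.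
have perB : forall B, B \in Sk T t A ->
    (2 * #|[set x in Sk T t B | #|x.2 :&: a| <= th]| <= #|Sk T t B|)%N.
  move=> B BS.
  have gB := Sk_good Tedge Tin gA BS.
  have B1 : nat_of_ord B.1 = (2 * t)%N by rewrite (Sk_layer Tedge BS) A1; lia.
  have hB : (B.1 + t <= 3 * t)%N by rewrite B1; lia.
  have LBB := LB Tedge Tin apos hsrc hoth gB hB.
  rewrite B1 (prod_down ht hm apos) in LBB.
  have aB : a \subset B.2 by apply: (Sk_up Tedge _ BS); rewrite A1; lia.
  have cB : #|B.2| = (2 * (t * q))%N.
    case: gB => /eqP -> _; rewrite B1 /lsize ltnn.
    have -> : (4 * t - 2 * t = 2 * t)%N by lia.
    by rewrite mulnA.
  have sc := small_count th aB ca cB.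
  have la := low_count a th.
  have lb := low_count (B.2 :\: a) th.
  have cba : #|B.2 :\: a| = (t * q)%N by rewrite cardsD (setIidPr aB) cB ca; lia.
  rewrite ca in la; rewrite cba in lb.
  have Wa := W_bound la. have Wb := W_bound lb.
  have injX : (#|[set x in Sk T t B | #|x.2 :&: a| <= th]| <=
     #|[set S : {set 'I_m} | [&& S \subset B.2, #|S| == (t * q)%N & #|S :&: a| <= th]]|)%N.
    apply: card_snd_le.
      move=> x y; rewrite !inE => /andP [xS _] /andP [yS _]; apply: val_inj.
      by rewrite /= (Sk_layer Tedge xS) (Sk_layer Tedge yS).
    move=> x; rewrite !inE => /andP [xS ->]; rewrite andbT.
    rewrite (Sk_down Tedge _ xS) /=; last by rewrite B1.
    have gx := Sk_good Tedge Tin gB xS.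
    case: gx => /eqP -> _; rewrite (Sk_layer Tedge xS) B1 /lsize.
    have -> : (2 * t + t < 2 * t)%N = false by apply/negbTE; rewrite -leqNgt; lia.
    have -> : (4 * t - (2 * t + t) = t)%N by lia.
    done.
  apply/leP; apply: INR_le; rewrite mult_INR.
  have e2 : INR 2 = 2 by simpl; lra.
  rewrite e2.
  apply: (Rle_trans _ _ _ _ LBB).
  have s1 := le_INR _ _ (elimT leP (leq_trans injX sc)).
  rewrite mult_INR in s1.
  have pa := pos_INR #|[set J : {set 'I_m} | (J \subset a) && (#|J| <= th)%N]|.
  have pb := pos_INR #|[set J : {set 'I_m} | (J \subset B.2 :\: a) && (#|J| <= th)%N]|.
  have s2 : 2 * W ^ 2 <= INR 'C(2 * (t * q), t * q) / alpha ^ t.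
    apply: (Rmult_le_reg_r (alpha ^ t)) => //.
    have -> : INR 'C(2 * (t * q), t * q) / alpha ^ t * alpha ^ t = INR 'C(2 * (t * q), t * q).
      by field; lra.
    lra.
  rewrite -/W in Wa Wb.
  have : INR #|[set J : {set 'I_m} | (J \subset a) && (#|J| <= th)%N]| *
         INR #|[set J : {set 'I_m} | (J \subset B.2 :\: a) && (#|J| <= th)%N]| <= W ^ 2.
    rewrite /= Rmult_1_r; apply: Rmult_le_compat => //.
  lra.
pose s := fun x : V t m => (#|x.2 :&: a| <= th)%N.
have eN : #|Sk T (t + t) A| = (\sum_(B in Sk T t A) #|Sk T t B|)%N.
  rewrite -sum1_card (Sk_sum Tin t t A (fun _ => 1%N)); apply: eq_bigr => B _.
  by rewrite sum1_card.
have eS : #|[set x in Sk T (t + t) A | s x]| =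
    (\sum_(B in Sk T t A) #|[set x in Sk T t B | s x]|)%N.
  rewrite -sum_bool_card (Sk_sum Tin t t A (fun x => (s x : nat))); apply: eq_bigr => B _.
  by rewrite sum_bool_card.
have eNS : #|Sk T (t + t) A| = (#|[set x in Sk T (t + t) A | s x]| +
    #|[set x in Sk T (t + t) A | ~~ s x]|)%N.
  rewrite -!sum_bool_card -big_split -sum1_card; apply: eq_bigr => x _.
  by case: (s x).
have h2S : (2 * #|[set x in Sk T (t + t) A | s x]| <= #|Sk T (t + t) A|)%N.
  rewrite eS eN big_distrr; apply: leq_sum => B BS; exact: perB.
have hL : (#|[set x in Sk T (t + t) A | ~~ s x]| <=
    #|[set S : {set 'I_m} | (#|S| == (t * q)%N) && (th < #|S :&: a|)%N]|)%N.
  apply: card_snd_le.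
    move=> x y; rewrite !inE => /andP [xS _] /andP [yS _]; apply: val_inj.
    by rewrite /= (Sk_layer Tedge xS) (Sk_layer Tedge yS).
  move=> x; rewrite !inE => /andP [xS]; rewrite /s -ltnNge => ->; rewrite andbT.
  have gx := Sk_good Tedge Tin gA xS.
  case: gx => /eqP -> _; rewrite (Sk_layer Tedge xS) A1 /lsize.
  have -> : (t + (t + t) < 2 * t)%N = false by apply/negbTE; rewrite -leqNgt; lia.
  have -> : (4 * t - (t + (t + t)) = t)%N by lia.
  done.
have lc := large_count th ca hm3.
have hN : (#|Sk T (t + t) A| <= 2 * #|[set S : {set 'I_m} | (#|S| == (t * q)%N) && (th < #|S :&: a|)%N]|)%N.
  lia.
move: LBA; have -> : (2 * t = t + t)%N by lia.
move=> LBA.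
set G := #|[set S : {set 'I_m} | _]| in hN lc.
set N := #|Sk T (t + t) A| in hN LBA.
set r := (m - 2 * (t * q) + 1)%N in hr lc.
set K := (t * q)%N in hK hm3 hr lc hN LBA th16 th16' ca *.
apply: (case2 (th := th) (r := r)) => //.
have pC : 0 < INR 'C(m - K, K).
  apply: lt_0_INR; apply/ltP; rewrite bin_gt0; rewrite /K; lia.
have a2t : 0 < alpha ^ (2 * t) by apply: pow_lt.
have X1 : INR 'C(m - K, K) <= 2 * INR G * alpha ^ (2 * t).
  have hN' := le_INR _ _ (elimT leP hN); rewrite mult_INR in hN'.
  have e2 : INR 2 = 2 by simpl; lra.
  rewrite e2 in hN'.
  have e22 : (t + t = 2 * t)%N by lia.
  rewrite e22 in LBA.
  apply: (Rmult_le_reg_r (/ alpha ^ (2 * t))); first by apply: Rinv_0_lt_compat.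
  have -> : 2 * INR G * alpha ^ (2 * t) * / alpha ^ (2 * t) = 2 * INR G by field; lra.
  rewrite -/(Rdiv _ _); lra.
have X3 := le_INR _ _ (elimT leP lc).
rewrite !mult_INR !INR_expn in X3.
have pR1 : 0 <= INR r ^ th.+1 by apply: pow_le; apply: pos_INR.
have pK1 : 0 <= INR K ^ th.+1 by apply: pow_le; apply: pos_INR.
have p2K : 0 <= INR 2 ^ K by apply: pow_le; apply: pos_INR.
have pG : 0 <= INR G by apply: pos_INR.
rewrite INR_expn /= -/(INR 2 ^ K).
have X2 : INR 'C(m - K, K) * INR r ^ th.+1 <= 2 * alpha ^ (2 * t) * (INR G * INR r ^ th.+1).
  have := Rmult_le_compat_r _ _ _ pR1 X1; lra.
have X4 : INR 'C(m - K, K) * INR r ^ th.+1 <=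
   INR 'C(m - K, K) * (2 * INR 2 ^ K * alpha ^ (2 * t) * INR K ^ th.+1).
  apply: Rle_trans X2 _.
  have := Rmult_le_compat_l _ _ _ (ltac:(lra) : 0 <= 2 * alpha ^ (2 * t)) X3; lra.
have := Rmult_le_reg_l _ _ _ pC X4.
move=> H; simpl in H; lra.
Qed.

End Part8.


Lemma card_setT_pow (m : nat) : #|{set 'I_m}| = (2 ^ m)%N.
Proof.
have := card_powerset [set: 'I_m]; rewrite cardsT card_ord => <-; apply: eq_card => S.
by rewrite powersetE subsetT.
Qed.

Lemma nverts_le t m q : (nverts t m q <= (3 * t).+1 * 2 ^ m)%N.
Proof.
rewrite /nverts; apply: leq_trans (max_card _) _.
by rewrite /V card_prod card_ord card_setT_pow.
Qed.

Lemma nverts_pos t m q : (0 < nverts t m q)%N.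
Proof.
rewrite /nverts; apply/card_gt0P; exists (src t m); rewrite inE /is_vertex /lsize /=.
rewrite cards0; case: ifP => h; first by rewrite mul0n.
have -> : t = 0%N by lia.
done.
Qed.

Lemma exp_le' a b : a <= b -> exp a <= exp b.
Proof. move=> [h|->]; [left; exact: exp_increasing| lra]. Qed.

Lemma nverts_pow t m q : (nverts t m q <= 2 ^ ((3 * t).+1 + m))%N.
Proof.
apply: leq_trans (nverts_le t m q) _.
rewrite expnD leq_mul2r; apply/orP; right; apply: ltnW; exact: ltn_expl.
Qed.

Theorem lemma9 :
  exists xi : R, 0 < xi /\
  forall rho : R, 0 < rho < xi ->
  exists c : R, 0 < c /\
  forall (mseq tseq qseq : nat -> nat),
    (forall k, (0 < tseq k)%N) ->
    (forall k, rho * INR (mseq k) = INR (tseq k * qseq k)) ->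
    (forall M : nat, exists K : nat, forall k, (K <= k)%N -> (M <= mseq k)%N) ->
    (forall B : R, exists K : nat, forall k, (K <= k)%N ->
        B * ln (INR (mseq k)) <= INR (mseq k) / INR (tseq k)) ->
    exists K : nat, forall k, (K <= k)%N ->
      forall (alpha : R) (T : {set V (tseq k) (mseq k) * V (tseq k) (mseq k)}),
        0 < alpha ->
        approx_sol (qseq k) alpha T ->
        Rpower (INR (nverts (tseq k) (mseq k) (qseq k))) (c / INR (3 * tseq k)) <= alpha.
Proof.
have p21 : 0 < 2 ^ 21 by apply: pow_lt; lra.
exists (/ 2 ^ 21); split; first by apply: Rinv_0_lt_compat.
move=> rho [rp rx].
exists (rho / 80); split; first lra.
move=> mseq tseq qseq htpos hrel hinf _.
have [M0 HM0] := INR_archimed rho 24 rp.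
have [K0 HK0] := hinf M0.
exists K0 => k hk alpha T apos hsol.
move: (htpos k) (hrel k) (HK0 k hk) T hsol.
move: (tseq k) (mseq k) (qseq k) => t m q ht hrk hmM T hsol.
have hM : INR M0 <= INR m by apply: le_INR; apply/leP.
have K24r : 24 < INR (t * q) by rewrite -hrk; nra.
have K24 : (24 <= t * q)%N.
  apply/leP; apply: INR_le; have -> : INR 24 = 24 by simpl; lra.
  lra.
have eY : 2 ^ 21 = 2 ^ 18 * 2 ^ 3 by rewrite -pow_add.
have Y1 : 1 <= 2 ^ 18 by apply: pow_R1_Rle; lra.
have rY : rho * (2 ^ 18 * 8) < 1.
  have := Rmult_lt_compat_r (2 ^ 21) _ _ p21 rx; rewrite Rinv_l; last lra.
  by rewrite eY; simpl (2 ^ 3); lra.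
have mp := pos_INR m.
have hm3 : (3 * (t * q) <= m)%N.
  apply/leP; apply: INR_le; rewrite mult_INR -hrk.
  have -> : INR 3 = 3 by simpl; lra.
  move: Y1 rY; move: (2 ^ 18) => Y Y1 rY; nra.
have hr0 : (2 ^ 18 * (t * q) + 2 * (t * q) <= m)%N.
  apply/leP; apply: INR_le; rewrite plus_INR mult_INR INR_expn [INR (2 * _)]mult_INR -hrk.
  have -> : INR 2 = 2 by simpl; lra.
  move: Y1 rY; move: (2 ^ 18) => Y Y1 rY; nra.
have hr : (2 ^ 18 * (t * q) <= m - 2 * (t * q) + 1)%N.
  move: hr0; move: (2 ^ 18 * (t * q))%N (t * q)%N => P K; lia.
have hK : (0 < t * q)%N by lia.
have cr := core ht hK hm3 hr apos hsol.
have tm : (t <= m)%N.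
  have : (t <= t * q)%N by rewrite leq_pmulr //; move: hK; rewrite muln_gt0 => /andP [].
  move: hm3; move: (t * q)%N => K; lia.
have tmR : INR t <= INR m by apply: le_INR; apply/leP.
have m1 : 1 <= INR m by have := le_INR 1 m (elimT leP (leq_trans ht tm)); simpl; lra.
have tp : 0 < INR t by apply: lt_0_INR; apply/ltP.
set n := nverts t m q.
have np : 0 < INR n by apply: lt_0_INR; apply/ltP; exact: nverts_pos.
have lnn : ln (INR n) <= (3 * INR t + 1 + INR m) * ln 2.
  have h := le_INR _ _ (elimT leP (nverts_pow t m q)).
  have := ln_le np h; rewrite INR_expn ln_pow; last by simpl; lra.
  rewrite plus_INR S_INR mult_INR.
  have -> : INR 2 = 2 by simpl; lra.
  have -> : INR 3 = 3 by simpl; lra.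
  lra.
rewrite /Rpower -[X in _ <= X](exp_ln alpha apos); apply: exp_le'.
rewrite mult_INR.
have -> : INR 3 = 3 by simpl; lra.
apply: (Rmult_le_reg_l (INR t)) => //.
have -> : INR t * (rho / 80 / (3 * INR t) * ln (INR n)) = rho / 240 * ln (INR n).
  field; lra.
have l2 := ln2_pos.
have s2 : (3 * INR t + 1 + INR m) * ln 2 <= 5 * INR m * ln 2.
  apply: Rmult_le_compat_r; lra.
have s3 : rho / 240 * ln (INR n) <= rho / 240 * (5 * INR m * ln 2).
  apply: Rmult_le_compat_l; lra.
have s4 : rho * INR m * ln 2 = INR (t * q) * ln 2 by rewrite hrk.
have s5 : 24 * ln 2 <= INR (t * q) * ln 2 by apply: Rmult_le_compat_r; lra.
lra.
Qed.
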